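(* For all $r\ge3$, $$\sum_{N>0}\dim_{\mathbb Q}\ker\big(E^{(2)}_{N,r}\cdots E^{(r-1)}_{N,r}\big)\,x^N=\mathbb O(x)\sum_{N>0}\dim_{\mathbb Q}\ker C_{N,r-1}\,x^N.$$
   Context: For integers $N,r\ge1$ let $S_{N,r}=\{(n_1,\dots,n_r)\in\mathbb Z^r:\ n_1+\dots+n_r=N,\ \text{each } n_i\ge3 \text{ odd}\}$; when used as an index set it is ordered lexicographically decreasingly. For $m=(m_1,\dots,m_r)$ and $n=(n_1,\dots,n_r)$ let $\delta\binom{m}{n}=1$ if $m_i=n_i$ for all $i$, and $0$ otherwise. Ihara action: for $f\in\mathbb Q[t]$ and a polynomial $g$ in $r-1$ variables, $(f\mathbin{\underline\circ}g)(x_1,\dots,x_r)=f(x_1)g(x_2,\dots,x_r)+\sum_{i=1}^{r-1}\big(f(x_{i+1}-x_i)g(x_1,\dots,\widehat{x_{i+1}},\dots,x_r)-(-1)^{\deg f}f(x_i-x_{i+1})g(x_1,\dots,\widehat{x_i},\dots,x_r)\big)$ (hats denote omitted variables). For positive integers $m_i,n_i$, $e\binom{m_1,\dots,m_r}{n_1,\dots,n_r}$ is the coefficient of $x_1^{n_1-1}\cdots x_r^{n_r-1}$ in $t^{m_1-1}\mathbin{\underline\circ}\,(y_1^{m_2-1}\cdots y_{r-1}^{m_r-1})$. $E_{N,r}$ is the $S_{N,r}\times S_{N,r}$ matrix with $(m,n)$-entry $e\binom{m}{n}$. For $2\le j\le r$, $E^{(j)}_{N,r}$ is the $S_{N,r}\times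 S_{N,r}$ matrix with $(m,n)$-entry $\delta\binom{m_1,\dots,m_{r-j}}{n_1,\dots,n_{r-j}}\,e\binom{m_{r-j+1},\dots,m_r}{n_{r-j+1},\dots,n_r}$ (so $E^{(r)}_{N,r}=E_{N,r}$). $C_{N,r}=E^{(2)}_{N,r}E^{(3)}_{N,r}\cdots E^{(r-1)}_{N,r}E_{N,r}$ (so $C_{N,2}=E_{N,2}$). For a matrix $A$, $\ker A$ denotes its right kernel. $\mathbb O(x)=\frac{x^3}{1-x^2}$. *)

(* Defs.v *)
From HB Require Import structures.
From mathcomp Require Import all_boot all_order all_algebra.
Set Implicit Arguments. Unset Strict Implicit. Unset Printing Implicit Defensive.
Import Order.TTheory GRing.Theory Num.Theory.
Local Open Scope ring_scope.

(* A polynomial is a finite list of terms (c, e): c * x_1^{e_1} ... x_k^{e_k}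
   (variables are 0-indexed in the exponent sequence; missing trailing
   exponents are 0).  Polynomials are compared through their coefficients. *)
Definition mpoly := seq (rat * seq nat).

Fixpoint addexp (s t : seq nat) : seq nat :=
  match s, t with
  | [::], _ => t
  | _, [::] => s
  | a :: s', b :: t' => (a + b)%N :: addexp s' t'
  end.

Definition mzero : mpoly := [::].
Definition mone : mpoly := [:: (1, [::])].
Definition madd (p q : mpoly) : mpoly := p ++ q.
Definition mscale (c : rat) (p : mpoly) : mpoly := [seq (c * t.1, t.2) | t <- p].
Definition msub (p q : mpoly) : mpoly := madd p (mscale (-1) q).
Definition mmul (p q : mpoly) : mpoly :=
  [seq (a.1 * b.1, addexp a.2 b.2) | a <- p, b <- q].
Definition mpow (p : mpoly) (k : nat) : mpoly := iter k (mmul p) mone.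

(* the variable x_{i+1} (0-indexed: index i) *)
Definition mX (i : nat) : mpoly := [:: (1, rcons (nseq i 0%N) 1%N)].

Definition expeq (s t : seq nat) : bool :=
  all (fun i => nth 0%N s i == nth 0%N t i) (iota 0 (maxn (size s) (size t))).

Definition mcoef (p : mpoly) (e : seq nat) : rat :=
  \sum_(t <- p | expeq t.2 e) t.1.

Definition mevalm (g : mpoly) (vs : seq mpoly) : mpoly :=
  flatten [seq mscale t.1
             (foldr mmul mone
                [seq mpow (nth mzero vs j) (nth 0%N t.2 j) | j <- iota 0 (size t.2)])
          | t <- g].

Definition pevalm (f : {poly rat}) (L : mpoly) : mpoly :=
  flatten [seq mscale f`_k (mpow L k) | k <- iota 0 (size f)].

Definition rmnth (T : Type) (i : nat) (s : seq T) : seq T := take i s ++ drop i.+1 s.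

(* Ihara action f o g, result a polynomial in r variables x_1..x_r
   (0-indexed 0..r-1), g a polynomial in r-1 variables.
   (f o g)(x) = f(x_1) g(x_2..x_r)
     + sum_{i=1}^{r-1} ( f(x_{i+1}-x_i) g(x_1,..,^x_{i+1},..,x_r)
                         - (-1)^{deg f} f(x_i-x_{i+1}) g(x_1,..,^x_i,..,x_r) ) *)
Definition ihara (r : nat) (f : {poly rat}) (g : mpoly) : mpoly :=
  let xs := [seq mX k | k <- iota 0 r] in
  madd (mmul (pevalm f (mX 0)) (mevalm g (behead xs)))
    (flatten [seq madd
                 (mmul (pevalm f (msub (mX k.+1) (mX k))) (mevalm g (rmnth k.+1 xs)))
                 (mscale (- (-1) ^+ (size f).-1)
                    (mmul (pevalm f (msub (mX k) (mX k.+1))) (mevalm g (rmnth k xs))))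
             | k <- iota 0 r.-1]).

(* e(m_1..m_r ; n_1..n_r): coefficient of x_1^{n_1-1}...x_r^{n_r-1} in
   t^{m_1-1} o (y_1^{m_2-1} ... y_{r-1}^{m_r-1}) *)
Definition ecoef (m n : seq nat) : rat :=
  mcoef (ihara (size m) (('X^((head 0%N m).-1) : {poly rat}))
                [:: (1, [seq k.-1 | k <- behead m])])
        [seq k.-1 | k <- n].

Fixpoint Sseq (N r : nat) : seq (seq nat) :=
  match r with
  | 0 => if N == 0%N then [:: [::]] else [::]
  | r'.+1 =>
      flatten [seq [seq a :: s | s <- Sseq (N - a) r']
              | a <- rev (iota 0 N.+1) & (3 <= a)%N && odd a]
  end.

Definition Smat (N r : nat) (F : seq nat -> seq nat -> rat) : 'M[rat]_(size (Sseq N r)) :=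
  \matrix_(i, j) F (nth [::] (Sseq N r) i) (nth [::] (Sseq N r) j).

Definition Ej (j N r : nat) : 'M[rat]_(size (Sseq N r)) :=
  Smat N r (fun m n => ((take (r - j) m == take (r - j) n)%:R : rat)
                       * ecoef (drop (r - j) m) (drop (r - j) n)).

Definition Emat (N r : nat) : 'M[rat]_(size (Sseq N r)) := Smat N r ecoef.

(* E^{(2)}_{N,r} E^{(3)}_{N,r} ... E^{(k+1)}_{N,r}  (empty product = 1) *)
Definition Eprod (N r k : nat) : 'M[rat]_(size (Sseq N r)) :=
  foldr (fun j A => Ej j N r *m A) 1%:M (iota 2 k).

Definition Cmat (N r : nat) : 'M[rat]_(size (Sseq N r)) :=
  Eprod N r (r - 2) *m Emat N r.

(* dimension of the right kernel {v | A v = 0} *)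
Definition dimker (n : nat) (A : 'M[rat]_n) : nat := \rank (kermx A^T).

Definition posser (a : nat -> nat) (N : nat) : nat := if (0 < N)%N then a N else 0%N.
(* coefficient of x^k in O(x) = x^3/(1-x^2) = sum_{j>=0} x^{3+2j} *)
Definition Ocoef (k : nat) : nat := ((3 <= k)%N && odd k : nat).
Definition sermul (a b : nat -> nat) (N : nat) : nat := (\sum_(k < N.+1) a k * b (N - k))%N.

(* Main.v *)
Require Import Defs.
From HB Require Import structures.
From mathcomp Require Import all_boot all_order all_algebra.
From mathcomp Require Import zify.
From Stdlib Require Import FunctionalExtensionality.
Set Implicit Arguments. Unset Strict Implicit. Unset Printing Implicit Defensive.
Import Order.TTheory GRing.Theory Num.Theory.
Local Open Scope ring_scope.

Definition Mx (L : seq (seq nat)) (F : seq nat -> seq nat -> rat) : 'M[rat]_(size L) :=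
  \matrix_(i, j) F (nth [::] L i) (nth [::] L j).

Definition fprod (L : seq (seq nat)) (F G : seq nat -> seq nat -> rat) x z :=
  \sum_(y <- L) F x y * G y z.

Lemma Mx_mul L F G : Mx L F *m Mx L G = Mx L (fprod L F G).
Proof.
apply/matrixP => i j; rewrite !mxE /fprod (big_nth [::]) big_mkord.
by apply: eq_bigr => k _; rewrite !mxE.
Qed.

Lemma rank_castmx m n m' n' (e : (m = m') * (n = n')) (A : 'M[rat]_(m, n)) :
  \rank (castmx e A) = \rank A.
Proof. by case: e => e1 e2; case: m' / e1; case: n' / e2; rewrite castmx_id. Qed.

Lemma dimkerE n (A : 'M[rat]_n) : dimker A = (n - \rank A)%N.
Proof. by rewrite /dimker mxrank_ker mxrank_tr. Qed.

Lemma rank_Mx_eq L L' F G : size L = size L' ->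
  (forall i j, (i < size L)%N -> (j < size L)%N ->
     F (nth [::] L i) (nth [::] L j) = G (nth [::] L' i) (nth [::] L' j)) ->
  \rank (Mx L F) = \rank (Mx L' G).
Proof.
move=> e H.
have -> : Mx L' G = castmx (e, e) (Mx L F).
  apply/matrixP => i j; rewrite castmxE !mxE /=.
  by rewrite H //; rewrite e.
by rewrite rank_castmx.
Qed.

Lemma dimker_Mx_eq L L' F G : size L = size L' ->
  (forall i j, (i < size L)%N -> (j < size L)%N ->
     F (nth [::] L i) (nth [::] L j) = G (nth [::] L' i) (nth [::] L' j)) ->
  dimker (Mx L F) = dimker (Mx L' G).
Proof. by move=> e H; rewrite !dimkerE (rank_Mx_eq e H) e. Qed.

Lemma rank_Mx_cat L1 L2 F :
  (forall x y, x \in L1 -> y \in L2 -> F x y = 0 /\ F y x = 0) ->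
  \rank (Mx (L1 ++ L2) F) = (\rank (Mx L1 F) + \rank (Mx L2 F))%N.
Proof.
move=> H.
have e : (size L1 + size L2 = size (L1 ++ L2))%N by rewrite size_cat.
have -> : Mx (L1 ++ L2) F = castmx (e, e) (block_mx (Mx L1 F) 0 0 (Mx L2 F)).
  apply/matrixP => i j; rewrite castmxE mxE.
  case: (splitP (cast_ord (esym e) i)) => i' Hi;
  case: (splitP (cast_ord (esym e) j)) => j' Hj;
  have {}Hi' : nat_of_ord i = _ := Hi; have {}Hj' : nat_of_ord j = _ := Hj.
  - have -> : cast_ord (esym e) i = lshift _ i' by apply: val_inj.
    have -> : cast_ord (esym e) j = lshift _ j' by apply: val_inj.
    by rewrite block_mxEul mxE !nth_cat Hi' Hj' !ltn_ord.
  - have -> : cast_ord (esym e) i = lshift _ i' by apply: val_inj.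
    have -> : cast_ord (esym e) j = rshift _ j' by apply: val_inj.
    rewrite block_mxEur mxE !nth_cat Hi' Hj' ltn_ord ltnNge leq_addr /= addKn.
    by case: (H _ _ (mem_nth [::] (ltn_ord i')) (mem_nth [::] (ltn_ord j'))).
  - have -> : cast_ord (esym e) i = rshift _ i' by apply: val_inj.
    have -> : cast_ord (esym e) j = lshift _ j' by apply: val_inj.
    rewrite block_mxEdl mxE !nth_cat Hi' Hj' ltn_ord ltnNge leq_addr /= addKn.
    by case: (H _ _ (mem_nth [::] (ltn_ord j')) (mem_nth [::] (ltn_ord i'))).
  - have -> : cast_ord (esym e) i = rshift _ i' by apply: val_inj.
    have -> : cast_ord (esym e) j = rshift _ j' by apply: val_inj.
    by rewrite block_mxEdr mxE !nth_cat Hi' Hj' !ltnNge !leq_addr /= !addKn.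
by rewrite rank_castmx rank_diag_block_mx.
Qed.

Definition hb (F : seq nat -> seq nat -> rat) :=
  forall x y, head 0%N x != head 0%N y -> F x y = 0.

Definition res (a : nat) (F : seq nat -> seq nat -> rat) := fun s t => F (a :: s) (a :: t).

Definition blocks (A : seq nat) (Ls : nat -> seq (seq nat)) :=
  flatten [seq [seq a :: s | s <- Ls a] | a <- A].

Lemma mem_blocks A Ls y : y \in blocks A Ls -> head 0%N y \in A.
Proof.
elim: A => [//|b A IH]; rewrite /blocks /= mem_cat => /orP [/mapP [s _ ->]|/IH].
  by rewrite /= inE eqxx.
by rewrite inE => ->; rewrite orbT.
Qed.

Lemma dimker_blocks A Ls F : uniq A -> hb F ->
  dimker (Mx (blocks A Ls) F) = (\sum_(a <- A) dimker (Mx (Ls a) (res a F)))%N.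
Proof.
move=> uA hF; elim: A uA => [|a A IH] /=.
  by rewrite big_nil /blocks /= dimkerE; case: (\rank _).
move=> /andP [aA uA]; rewrite big_cons -IH //.
rewrite !dimkerE /blocks /= rank_Mx_cat; last first.
  move=> x y /mapP [s _ ->] /mem_blocks hy.
  have ny : head 0%N y != a by apply: contraNneq aA => <-.
  by rewrite !hF //= eq_sym.
have -> : \rank (Mx [seq a :: s | s <- Ls a] F) = \rank (Mx (Ls a) (res a F)).
  apply: rank_Mx_eq; first by rewrite size_map.
  move=> i j; rewrite size_map => hi hj.
  by rewrite (nth_map [::]) // (nth_map [::]).
rewrite size_cat size_map.
have h1 := rank_leq_row (Mx (Ls a) (res a F)).
have h2 := rank_leq_row (Mx (flatten [seq [seq a0 :: s | s <- Ls a0] | a0 <- A]) F).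
lia.
Qed.

Lemma hb_fprod L F G : hb F -> hb G -> hb (fprod L F G).
Proof.
move=> hF hG x z hxz; rewrite /fprod big1 // => y _.
case: (eqVneq (head 0%N x) (head 0%N y)) => [e|ne].
  by rewrite (hG y z) ?mulr0 // -e.
by rewrite hF ?mul0r.
Qed.

Lemma res_fprod A Ls F G a : uniq A -> a \in A -> hb F ->
  res a (fprod (blocks A Ls) F G) = fprod (Ls a) (res a F) (res a G).
Proof.
move=> uA aA hF; apply: functional_extensionality => s;
apply: functional_extensionality => t.
rewrite /res /fprod /blocks big_flatten /= big_map (bigD1_seq a) //= big_map.
rewrite [X in _ + X]big1 ?addr0 // => b ba; rewrite big_map big1 // => u _.
by rewrite hF ?mul0r //= eq_sym.
Qed.

Definition Efun (j r : nat) := fun m n : seq nat =>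
  ((take (r - j) m == take (r - j) n)%:R : rat) * ecoef (drop (r - j) m) (drop (r - j) n).

Lemma head_take k (x : seq nat) : head 0%N (take k.+1 x) = head 0%N x.
Proof. by case: x. Qed.

Lemma hb_Efun j r : (j < r)%N -> hb (Efun j r).
Proof.
move=> jr x y hxy; rewrite /Efun.
have [k ->] : exists k, (r - j)%N = k.+1 by exists (r - j).-1; lia.
case: eqP => [e|_]; last by rewrite mul0r.
by move: hxy; rewrite -(head_take k x) -(head_take k y) e eqxx.
Qed.

Lemma res_Efun a j r : (j <= r)%N -> res a (Efun j r.+1) = Efun j r.
Proof.
move=> jr; apply: functional_extensionality => s;
apply: functional_extensionality => t.
by rewrite /res /Efun subSn //= eqseq_cons eqxx.
Qed.

Definition ffold L r base js :=
  foldr (fun j f => fprod L (Efun j r) f) base js.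

Lemma res_ffold A Ls a r base js : uniq A -> a \in A -> hb base ->
  all (fun j => j <= r)%N js ->
  hb (ffold (blocks A Ls) r.+1 base js) /\
  res a (ffold (blocks A Ls) r.+1 base js) = ffold (Ls a) r (res a base) js.
Proof.
move=> uA aA hbase; elim: js => [//|j js IH] /= /andP [jr /IH [h1 h2]].
have hE : hb (Efun j r.+1) by apply: hb_Efun.
split; first by apply: hb_fprod.
by rewrite res_fprod // h2 res_Efun.
Qed.

Lemma hb_ffold L r base js : hb base -> all (fun j => j <= r)%N js ->
  hb (ffold L r.+1 base js).
Proof.
move=> hbase; elim: js => [//|j js IH] /= /andP [jr /IH h].
by apply: hb_fprod => //; apply: hb_Efun.
Qed.

Lemma Mx_fold N r base js :
  foldr (fun j A => Ej j N r *m A) (Mx (Sseq N r) base) js =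
  Mx (Sseq N r) (ffold (Sseq N r) r base js).
Proof.
elim: js => [//|j js IH] /=; rewrite IH.
by rewrite -Mx_mul.
Qed.

Lemma fold1 N r js (B : 'M[rat]_(size (Sseq N r))) :
  foldr (fun j A => Ej j N r *m A) 1%:M js *m B =
  foldr (fun j A => Ej j N r *m A) B js.
Proof. by elim: js => [|j js IH] /=; rewrite ?mul1mx // -mulmxA IH. Qed.

Lemma Cmat_eq M r : Cmat M r =
  Mx (Sseq M r) (ffold (Sseq M r) r (Efun r r) (iota 2 (r - 2))).
Proof.
rewrite /Cmat /Eprod fold1 -Mx_fold; congr foldr.
rewrite /Emat; congr Smat.
apply: functional_extensionality => s;
apply: functional_extensionality => t.
by rewrite /Efun subnn !take0 !drop0 /= mul1r.
Qed.

Lemma Eprod_eq N r : (2 <= r)%N -> Eprod N r.+1 (r.+1 - 2) =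
  Mx (Sseq N r.+1) (ffold (Sseq N r.+1) r.+1 (Efun r r.+1) (iota 2 (r - 2))).
Proof.
move=> hr; rewrite -Mx_fold /Eprod.
have -> : (r.+1 - 2 = (r - 2) + 1)%N by lia.
rewrite iotaD foldr_cat /= mulmx1.
by have -> : (2 + (r - 2))%N = r by lia.
Qed.

Lemma dimker_Cmat0 r : dimker (Cmat 0 r.+1) = 0%N.
Proof.
have h : size (Sseq 0 r.+1) = 0%N by [].
have := rank_leq_row (Cmat 0 r.+1).
rewrite dimkerE; lia.
Qed.

Theorem corollary4p3 (r : nat) (hr : (3 <= r)%N) :
  forall N : nat,
    posser (fun M => dimker (Eprod M r (r - 2))) N
    = sermul Ocoef (posser (fun M => dimker (Cmat M (r - 1)))) N.
Proof.
case: r hr => // r hr N.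
have hr2 : (2 <= r)%N by lia.
have -> : (r.+1 - 1 = r)%N by lia.
rewrite /posser /sermul.
case: N => [|N]; first by rewrite big_ord1.
rewrite /= Eprod_eq //.
set A := [seq a <- rev (iota 0 N.+2) | (3 <= a)%N && odd a].
have uA : uniq A by rewrite filter_uniq // rev_uniq iota_uniq.
pose Ls := fun a => Sseq (N.+1 - a) r.
have hbF : forall a, a \in A -> hb (ffold (blocks A Ls) r.+1 (Efun r r.+1) (iota 2 (r - 2))) /\
   res a (ffold (blocks A Ls) r.+1 (Efun r r.+1) (iota 2 (r - 2))) =
   ffold (Ls a) r (res a (Efun r r.+1)) (iota 2 (r - 2)).
  move=> a aA; apply: res_ffold => //; first exact: hb_Efun.
  by apply/allP => j; rewrite mem_iota; lia.
transitivity (\sum_(a <- A) dimker (Mx (Ls a)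
   (res a (ffold (blocks A Ls) r.+1 (Efun r r.+1) (iota 2 (r - 2))))))%N.
  apply: dimker_blocks => //.
  apply: hb_ffold; first exact: hb_Efun.
  by apply/allP => j; rewrite mem_iota; lia.
rewrite (eq_big_seq (fun a => dimker (Cmat (N.+1 - a) r))); last first.
  move=> a aA; rewrite (proj2 (hbF a aA)) Cmat_eq res_Efun //.
rewrite /A big_filter big_rev big_mkcond.
rewrite -[iota 0 N.+2]/(index_iota 0 N.+2) big_mkord.
apply: eq_bigr => a _.
rewrite /Ocoef; case: ifP => // /andP [a3 ao].
rewrite mul1n.
case: ifP => // h.
have -> : (N.+1 - a = 0)%N by lia.
case: r hr hr2 {hbF Ls} => // r' _ _; exact: dimker_Cmat0.
Qed.
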